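(* Let $f$ be a non-degenerate Hermitian or quadratic form of finite Witt index $n\ge2$ on a vector space $V$ over a field $\mathbb F$, with polar space $\mathcal P=\mathcal P(f)$ naturally embedded in $\mathrm{PG}(V)$, and assume $\mathcal P$ is not a grid (i.e. not the case $f$ quadratic, $n=2$, $\dim V=4$). Let $X$ be a nice subspace of $\mathcal P$. Then $\langle X\rangle_{\mathrm{PG}(V)}\cap\mathcal P=X$.
   Context: Points of $\mathcal P(f)$ are the 1-spaces of $V$ isotropic (Hermitian case) or singular (quadratic case) for $f$; lines are the totally isotropic/singular 2-spaces. A subspace of $\mathcal P$ is a set of points containing every line meeting it in at least two points. A nice subspace of $\mathcal P$ is a subspace containing two mutually disjoint maximal singular subspaces of $\mathcal P$ (equivalently, $\mathcal P$ induces on it a non-degenerate polar space of rank $n$). $\langle X\rangle_{\mathrm{PG}(V)}$ is the projective subspace of $\mathrm{PG}(V)$ spanned by the points of $X$. For quadratic $q$, non-degenerate means $q(v)\ne0$ for all nonzero $v$ in the radical of its bilinearization. *)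

(* Defs.v *)
From HB Require Import structures.
From mathcomp Require Import all_boot all_order all_algebra.
Set Implicit Arguments. Unset Strict Implicit. Unset Printing Implicit Defensive.
Import GRing.Theory.
Local Open Scope ring_scope.

Section Polar.
Variables (F : fieldType) (V : lmodType F).

Inductive pform : Type :=
  | Herm of (F -> F) & (V -> V -> F)
  | Quad of (V -> F).

Definition bilin (q : V -> F) (u w : V) : F := q (u + w) - q u - q w.

Definition is_herm_form (sigma : F -> F) (f : V -> V -> F) : Prop :=
  [/\ (forall a b, sigma (a + b) = sigma a + sigma b),
      (forall a b, sigma (a * b) = sigma a * sigma b),
      (forall a, sigma (sigma a) = a) &
      (exists a, sigma a <> a)] /\
  (forall a x y z, f (a *: x + y) z = a * f x z + f y z) /\
  (forall x y, f y x = sigma (f x y)).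

Definition is_quad_form (q : V -> F) : Prop :=
  (forall a v, q (a *: v) = a ^+ 2 * q v) /\
  (forall a u u' w, bilin q (a *: u + u') w = a * bilin q u w + bilin q u' w).

Definition is_pform (phi : pform) : Prop :=
  match phi with
  | Herm sigma f => is_herm_form sigma f
  | Quad q => is_quad_form q
  end.

Definition pform_nondeg (phi : pform) : Prop :=
  match phi with
  | Herm _ f => forall v, (forall w, f v w = 0) -> v = 0
  | Quad q => forall v, (forall w, bilin q v w = 0) -> q v = 0 -> v = 0
  end.

Definition psingular (phi : pform) (v : V) : Prop :=
  match phi with
  | Herm _ f => f v v = 0
  | Quad q => q v = 0
  end.

Definition porth (phi : pform) (u w : V) : Prop :=
  match phi with
  | Herm _ f => f u w = 0
  | Quad q => bilin q u w = 0
  end.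

Definition is_vsub (W : V -> Prop) : Prop :=
  W 0 /\ forall a u w, W u -> W w -> W (a *: u + w).

Definition lspan (S : V -> Prop) (v : V) : Prop :=
  exists k (c : 'I_k -> F) (x : 'I_k -> V),
    (forall i, S (x i)) /\ v = \sum_(i < k) c i *: x i.

Definition lin_indep k (x : 'I_k -> V) : Prop :=
  forall c : 'I_k -> F, \sum_(i < k) c i *: x i = 0 -> forall i, c i = 0.

Definition has_dim (W : V -> Prop) (k : nat) : Prop :=
  exists x : 'I_k -> V, lin_indep x /\
    forall v, W v <-> lspan (fun u => exists i, u = x i) v.

Definition tot_singular (phi : pform) (W : V -> Prop) : Prop :=
  forall u w, W u -> W w -> psingular phi u /\ porth phi u w.

Definition witt_index (phi : pform) (n : nat) : Prop :=
  (exists W, is_vsub W /\ tot_singular phi W /\ has_dim W n) /\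
  (forall W, is_vsub W -> tot_singular phi W ->
     forall x : 'I_n.+1 -> V, (forall i, W (x i)) -> ~ lin_indep x).

(* maximal totally psingular vector subspaces = maximal psingular subspaces of P *)
Definition max_singular (phi : pform) (W : V -> Prop) : Prop :=
  [/\ is_vsub W, tot_singular phi W &
      forall W', is_vsub W' -> tot_singular phi W' ->
        (forall v, W v -> W' v) -> forall v, W' v -> W v].

(* Sets of points of PG(V): X is a predicate on vectors, the point <v>
   belongs to the set iff X v; X contains only nonzero vectors and is
   closed under nonzero scalar multiples. *)
Definition is_pointset (X : V -> Prop) : Prop :=
  (forall v, X v -> v <> 0) /\ (forall a v, X v -> a <> 0 -> X (a *: v)).

(* subspace of the polar space P(phi): a set of points of P containing every
   line (totally psingular 2-space) meeting it in at least two points *)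
Definition polar_subspace (phi : pform) (X : V -> Prop) : Prop :=
  [/\ is_pointset X,
      (forall v, X v -> psingular phi v) &
      (forall u w, X u -> X w -> lin_indep [ffun i : 'I_2 => if i == ord0 then u else w] ->
         porth phi u w ->
         forall a b, a *: u + b *: w <> 0 -> X (a *: u + b *: w))].

Definition nice_subspace (phi : pform) (X : V -> Prop) : Prop :=
  polar_subspace phi X /\
  exists W1 W2, [/\ max_singular phi W1, max_singular phi W2,
    (forall v, W1 v -> W2 v -> v = 0),
    (forall v, W1 v -> v <> 0 -> X v) &
    (forall v, W2 v -> v <> 0 -> X v)].

Definition is_quad (phi : pform) : Prop :=
  match phi with Quad _ => True | Herm _ _ => False end.

End Polar.

(* Main.v *)
Require Import Defs.
From HB Require Import structures.
From mathcomp Require Import all_boot all_order all_algebra.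
From mathcomp Require Import ring.
From Stdlib Require Import Classical_Prop.
Set Implicit Arguments. Unset Strict Implicit. Unset Printing Implicit Defensive.
Import GRing.Theory.
Local Open Scope ring_scope.

Definition sgf (F : fieldType) (V : lmodType F) (phi : pform V) : F -> F :=
  match phi with Herm s _ => s | Quad _ => id end.
Definition bf (F : fieldType) (V : lmodType F) (phi : pform V) : V -> V -> F :=
  match phi with Herm _ f => f | Quad q => bilin q end.



Section Vsub.
Variables (F : fieldType) (V : lmodType F) (W : V -> Prop).
Hypothesis HW : is_vsub W.
Lemma vs0 : W 0. Proof. by case: HW. Qed.
Lemma vsD u w : W u -> W w -> W (u + w).
Proof. by move=> hu hw; have := HW.2 1 u w hu hw; rewrite scale1r. Qed.
Lemma vsZ a u : W u -> W (a *: u).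
Proof. by move=> hu; have := HW.2 a u 0 hu vs0; rewrite addr0. Qed.
Lemma vsN u : W u -> W (- u).
Proof. by move=> hu; rewrite -scaleN1r; apply: vsZ. Qed.
Lemma vsB u w : W u -> W w -> W (u - w).
Proof. by move=> hu hw; apply: vsD => //; apply: vsN. Qed.
End Vsub.

Definition indep2 (F : fieldType) (V : lmodType F) (u w : V) :=
  forall a c : F, a *: u + c *: w = 0 -> a = 0 /\ c = 0.

Lemma indep2_lin (F : fieldType) (V : lmodType F) (u w : V) :
  indep2 u w -> lin_indep [ffun i : 'I_2 => if i == ord0 then u else w].
Proof.
move=> h c hs.
rewrite !big_ord_recr big_ord0 /= in hs. rewrite !ffunE /= add0r in hs.
have [h0 h1] := h _ _ hs.
move=> i; case: i => [[|[|k]] hk] //.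
- by rewrite -h0; congr c; apply: val_inj.
- by rewrite -h1; congr c; apply: val_inj.
Qed.

Lemma indep2C (F : fieldType) (V : lmodType F) (u w : V) : indep2 u w -> indep2 w u.
Proof. by move=> h a c e; rewrite addrC in e; have [] := h _ _ e. Qed.

Lemma indep2_nz (F : fieldType) (V : lmodType F) (u w : V) a c :
  indep2 u w -> (a != 0) || (c != 0) -> a *: u + c *: w <> 0.
Proof. by move=> h /orP[] /eqP nz e; have [] := h _ _ e. Qed.

Lemma pform_cases (F : fieldType) (V : lmodType F) (p : pform V) :
  (exists q, p = Quad q) \/ exists s f, p = Herm s f.
Proof. by case: p => [s f|q]; [right; exists s, f | left; exists q]. Qed.

Lemma comb2 (F : fieldType) (V : lmodType F) (v u : V) c A B :
  A *: (v + u) + B *: (v + c *: u) = (A + B) *: v + (A + B * c) *: u.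
Proof. by rewrite !scalerDr !scalerA !scalerDl addrACA. Qed.

Lemma rearr (F : fieldType) (V : lmodType F) (a b c d : V) : (a + b) + (c + d) = (a + d) + (b + c).
Proof. by rewrite [c + d]addrC addrACA. Qed.

Section Form.
Variables (F : fieldType) (V : lmodType F) (phi : pform V).
Hypothesis Hphi : is_pform phi.
Local Notation sg := (sgf phi).
Local Notation b := (bf phi).
Local Notation sing := (psingular phi).

Lemma porthE u w : porth phi u w <-> b u w = 0.
Proof. by case: phi. Qed.

Lemma sgD a c : sg (a + c) = sg a + sg c.
Proof. by move: Hphi; case: phi => //= s f [[]]. Qed.
Lemma sgM a c : sg (a * c) = sg a * sg c.
Proof. by move: Hphi; case: phi => //= s f [[]]. Qed.
Lemma sgK a : sg (sg a) = a.
Proof. by move: Hphi; case: phi => //= s f [[]]. Qed.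
Lemma sg0 : sg 0 = 0.
Proof. have h := sgD 0 0; rewrite addr0 in h. by apply: (addrI (sg 0)); rewrite -h addr0. Qed.
Lemma sg_inj a c : sg a = sg c -> a = c.
Proof. by move=> h; rewrite -(sgK a) h sgK. Qed.
Lemma sg_eq0 a : (sg a == 0) = (a == 0).
Proof. apply/eqP/eqP => [h|->]; last exact: sg0. by apply: sg_inj; rewrite h sg0. Qed.
Lemma sg1 : sg 1 = 1.
Proof.
have h := sgM 1 1; rewrite mul1r in h.
have nz : sg 1 != 0 by rewrite sg_eq0 oner_neq0.
by apply: (mulfI nz); rewrite mulr1 -h.
Qed.

Lemma sgV a : sg (a^-1) = (sg a)^-1.
Proof.
have [->|nz] := eqVneq a 0; first by rewrite invr0 sg0 invr0.
have nz' : sg a != 0 by rewrite sg_eq0.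
apply: (mulfI nz'); by rewrite -sgM mulfV // mulfV // sg1.
Qed.
Lemma sgN a : sg (- a) = - sg a.
Proof. apply: (addrI (sg a)); by rewrite -sgD !subrr sg0. Qed.

Lemma bf_linl a u u' w : b (a *: u + u') w = a * b u w + b u' w.
Proof. by move: Hphi; case: phi => /= [s f [_ [h _]]|q [_ h]]; apply: h. Qed.

Lemma bf_sym u w : b w u = sg (b u w).
Proof.
move: Hphi; case: phi => /= [s f [_ [_ h]]|q _]; first exact: h.
rewrite /bilin (addrC w u); by rewrite -!addrA (addrC (- q w)).
Qed.

Lemma bf0l w : b 0 w = 0.
Proof.
have h := bf_linl 1 0 0 w; rewrite scaler0 addr0 mul1r in h.
by apply: (addrI (b 0 w)); rewrite -h addr0.
Qed.
Lemma bfDl u u' w : b (u + u') w = b u w + b u' w.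
Proof. by have := bf_linl 1 u u' w; rewrite scale1r mul1r. Qed.
Lemma bfZl a u w : b (a *: u) w = a * b u w.
Proof. by have := bf_linl a u 0 w; rewrite addr0 bf0l addr0. Qed.
Lemma bfNl u w : b (- u) w = - b u w.
Proof. by rewrite -scaleN1r bfZl mulN1r. Qed.
Lemma bfBl u u' w : b (u - u') w = b u w - b u' w.
Proof. by rewrite bfDl bfNl. Qed.
Lemma bf0r w : b w 0 = 0.
Proof. by rewrite bf_sym bf0l sg0. Qed.
Lemma bfDr w u u' : b w (u + u') = b w u + b w u'.
Proof. by rewrite bf_sym bfDl sgD -!bf_sym. Qed.
Lemma bfZr a w u : b w (a *: u) = sg a * b w u.
Proof. by rewrite bf_sym bfZl sgM -bf_sym. Qed.
Lemma bfNr w u : b w (- u) = - b w u.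
Proof. by rewrite bf_sym bfNl sgN -bf_sym. Qed.
Lemma bfBr w u u' : b w (u - u') = b w u - b w u'.
Proof. by rewrite bfDr bfNr. Qed.
Lemma bf_sym0 u w : b u w = 0 -> b w u = 0.
Proof. by move=> h; rewrite bf_sym h sg0. Qed.

Lemma sing_bf v : sing v -> b v v = 0.
Proof.
move: Hphi; case: phi => /= [s f _ //|q [hq _] h].
have e : v + v = (1 + 1) *: v by rewrite scalerDl scale1r.
by rewrite /bilin e hq h mulr0 !subr0.
Qed.

Lemma sing0 : sing 0.
Proof.
have h := bf0l 0; move: Hphi h; case: phi => /= [s f _ //|q [hq _] _].
by have := hq 0 0; rewrite scaler0 expr0n /= mul0r.
Qed.

Lemma sing_comb a u w : sing u -> sing w -> b u w = 0 -> sing (a *: u + w).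
Proof.
move=> su sw h.
have h' : b w u = 0 by apply: bf_sym0.
have E : b (a *: u + w) (a *: u + w) = 0.
  by rewrite bf_linl !bfDr !bfZr (sing_bf su) (sing_bf sw) h h' !(mulr0, addr0).
have Z : b (a *: u) w = 0 by rewrite bfZl h mulr0.
move: Hphi su sw Z E; case: phi => /= [s f _ _ _ _ -> //|q [hq _] su sw Z _].
have e : q (a *: u + w) = bilin q (a *: u) w + q (a *: u) + q w.
  rewrite /bilin; ring.
by rewrite e Z hq su sw mulr0 !addr0.
Qed.

Lemma sing_scale a u : sing u -> sing (a *: u).
Proof. move=> su; rewrite -[a *: u]addr0; apply: sing_comb => //; [exact: sing0 | exact: bf0r]. Qed.



Lemma msing_vsub W : max_singular phi W -> is_vsub W.
Proof. by case. Qed.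
Lemma msing_sing W v : max_singular phi W -> W v -> sing v.
Proof. by case=> _ ts _ wv; case: (ts v v wv wv). Qed.
Lemma msing_orth W u w : max_singular phi W -> W u -> W w -> b u w = 0.
Proof. by case=> _ ts _ wu ww; case: (ts u w wu ww) => _ /porthE. Qed.

Lemma MAX W s : max_singular phi W -> sing s -> (forall w, W w -> b w s = 0) -> W s.
Proof.
move=> M ss hs; have [vs ts mx] := M.
pose W' := fun v => exists w c, W w /\ v = w + c *: s.
have vs' : is_vsub W'.
  split; first by exists 0, 0; split; [exact: vs0 vs | rewrite scale0r addr0].
  move=> a u w [w1 [c1 [h1 ->]]] [w2 [c2 [h2 ->]]].
  exists (a *: w1 + w2), (a * c1 + c2); split; first exact: vs.2.
  by rewrite scalerDr scalerDl scalerA addrACA.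
have ts' : tot_singular phi W'.
  move=> u u' [w1 [c1 [h1 ->]]] [w2 [c2 [h2 ->]]]; split.
    rewrite addrC; apply: sing_comb => //; first exact: msing_sing h1.
    by apply: bf_sym0; apply: hs.
  apply/porthE; rewrite bfDl !bfDr !bfZl !bfZr // (msing_orth M h1 h2) (hs _ h1).
  by rewrite (bf_sym0 (hs _ h2)) (sing_bf ss) !(mulr0, addr0).
have := mx W' vs' ts' (fun v hv => ex_intro _ v (ex_intro _ 0 (conj hv (esym (etrans (f_equal _ (scale0r s)) (addr0 v)))))) s.
apply; exists 0, 1; split; [exact: vs0 vs | by rewrite add0r scale1r].
Qed.
Lemma propl (P : V -> Prop) (al be : V -> F) w0 :
  is_vsub P -> (forall a u w, al (a *: u + w) = a * al u + al w) ->
  (forall a u w, be (a *: u + w) = a * be u + be w) -> P w0 -> al w0 != 0 ->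
  (forall w, P w -> al w = 0 -> be w = 0) -> exists lam, forall w, P w -> be w = lam * al w.
Proof.
move=> vs hal hbe P0 nz H; exists (be w0 / al w0) => w Pw.
have e : be ((- (al w / al w0)) *: w0 + w) = 0.
  apply: H; first exact: vs.2.
  by rewrite hal mulNr divfK // addNr.
rewrite hbe in e.
have -> : be w = al w / al w0 * be w0.
  by move/eqP: e; rewrite mulNr addrC subr_eq0 => /eqP.
by ring.
Qed.

Lemma bf_lin1 x a u w : b (a *: u + w) x = a * b u x + b w x.
Proof. exact: bf_linl. Qed.

Lemma nz_of_indep (u w : V) : indep2 u w -> u <> 0.
Proof. move=> h e; have [] := h 1 0; last by move/eqP; rewrite oner_eq0.
by rewrite e scaler0 scale0r addr0. Qed.

Lemma indepY (Y : V -> Prop) y x : is_vsub Y -> Y y -> ~ Y x -> y <> 0 -> indep2 y x.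
Proof.
move=> vs Yy nYx ny a c e.
have c0 : c = 0.
  apply/eqP; apply: contraT => nc; exfalso; apply: nYx.
  have e' : c *: x = - (a *: y) by apply: (addrI (a *: y)); rewrite e subrr.
  have -> : x = c^-1 *: (- (a *: y)) by rewrite -e' scalerA mulVf // scale1r.
  by apply: vsZ => //; apply: vsN => //; apply: vsZ.
split=> //; move: e; rewrite c0 scale0r addr0 => /eqP; rewrite scaler_eq0 => /orP[/eqP//|/eqP//].
Qed.



Lemma two_vecs W1 (W : V -> Prop) a0 b0 : max_singular phi W1 -> is_vsub W ->
  tot_singular phi W -> W a0 -> W b0 -> indep2 a0 b0 ->
  exists e1 e2, [/\ W1 e1, W1 e2 & indep2 e1 e2].
Proof.
move=> M vs ts Wa Wb ind.
apply: NNPP => H.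
have sW v : W v -> sing v by move=> Wv; case: (ts v v Wv Wv).
have oW u v : W u -> W v -> b u v = 0 by move=> Wu Wv; case: (ts u v Wu Wv) => _ /porthE.
have na : a0 <> 0 := nz_of_indep ind.
have [e [We ne]] : exists e, W1 e /\ e <> 0.
  apply: NNPP => H1; apply: na.
  have : W1 a0.
    apply: MAX M (sW a0 Wa) _ => w Ww.
    have -> : w = 0 by apply: NNPP => nw; apply: H1; exists w.
    exact: bf0l.
  by move=> h; apply: NNPP => nz; apply: H1; exists a0.
have mult u : W1 u -> exists k, u = k *: e.
  move=> Wu; apply: NNPP => nk; apply: H; exists e, u; split => // al be h.
  have be0 : be = 0.
    apply/eqP; apply: contraT => nb; exfalso; apply: nk; exists (- (be^-1 * al)).
    have e' : be *: u = - (al *: e) by apply: (addrI (al *: e)); rewrite h subrr.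
    by rewrite scaleNr -scalerA -scalerN -e' scalerA mulVf // scale1r.
  split => //; move: h; rewrite be0 scale0r addr0 => /eqP; rewrite scaler_eq0.
  by case/orP=> /eqP.
have orthW1 g : b g e = 0 -> forall w, W1 w -> b w g = 0.
  by move=> h w Ww; have [k ->] := mult w Ww; rewrite bfZl bf_sym h sg0 mulr0.
have [g [Wg ng ge]] : exists g, [/\ W g, g <> 0 & b g e = 0].
  case: (eqVneq (b b0 e *: a0 + (- b a0 e) *: b0) 0) => [h|h].
    have [_ h2] := ind _ _ h.
    exists a0; split => //; by apply/eqP; rewrite -oppr_eq0 h2.
  exists (b b0 e *: a0 + (- b a0 e) *: b0); split.
  - by apply: vs.2 => //; apply: vsZ.
  - by apply/eqP.
  - by rewrite bfDl !bfZl mulNr mulrC subrr.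
have W1g : W1 g := MAX M (sW g Wg) (orthW1 g ge).
have [k gk] := mult g W1g.
have k0 : k != 0 by apply: contraT => /negPn /eqP k0; case: ng; rewrite gk k0 scale0r.
have We' : W e.
  have -> : e = k^-1 *: g by rewrite gk scalerA mulVf // scale1r.
  exact: vsZ.
apply: H; exists a0, b0; split => //.
- by apply: MAX M (sW _ Wa) _ => w Ww; apply: orthW1 => //; apply: oW.
- by apply: MAX M (sW _ Wb) _ => w Ww; apply: orthW1 => //; apply: oW.
Qed.

Section Nice.
Variables (X W1 W2 : V -> Prop).
Hypotheses (HX : polar_subspace phi X) (M1 : max_singular phi W1) (M2 : max_singular phi W2)
  (D12 : forall v, W1 v -> W2 v -> v = 0) (X1 : forall v, W1 v -> v <> 0 -> X v)
  (X2 : forall v, W2 v -> v <> 0 -> X v).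
Variables (e1 e2 : V).
Hypotheses (E1 : W1 e1) (E2 : W1 e2) (E12 : indep2 e1 e2).

Lemma Xnz v : X v -> v <> 0.
Proof. by case: HX => [[h _] _ _]; apply: h. Qed.
Lemma Xsing v : X v -> sing v.
Proof. by case: HX => _ h _; apply: h. Qed.
Lemma XZ a v : X v -> a != 0 -> X (a *: v).
Proof. by case: HX => [[_ h] _ _] xv /eqP; apply: h. Qed.
Lemma Xline u w a c : X u -> X w -> indep2 u w -> b u w = 0 -> (a != 0) || (c != 0) ->
  X (a *: u + c *: w).
Proof.
case: HX => _ _ h xu xw ind o nz; apply: h => //.
- exact: indep2_lin.
- exact/porthE.
- exact: indep2_nz.
Qed.
Lemma Xline1 u w : X u -> X w -> indep2 u w -> b u w = 0 -> X (u + w).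
Proof. by move=> *; rewrite -[u]scale1r -[w]scale1r; apply: Xline => //; rewrite oner_eq0. Qed.

Lemma indepW u w : W1 u -> W2 w -> u <> 0 -> w <> 0 -> indep2 u w.
Proof.
move=> Wu Ww nu nw a c e.
have vs1 := msing_vsub M1; have vs2 := msing_vsub M2.
have e' : a *: u = - (c *: w) by apply: (addrI (c *: w)); rewrite addrC e subrr.
have h1 : a *: u = 0 by apply: D12; [exact: vsZ | rewrite e'; apply: vsN => //; exact: vsZ].
have h2 : c *: w = 0 by move: e; rewrite h1 add0r.
move/eqP: h1; move/eqP: h2; rewrite !scaler_eq0.
by case/orP=> [/eqP|/eqP//] -> /orP[/eqP|/eqP].
Qed.

Lemma W1_perp x : exists e, [/\ W1 e, e <> 0 & b e x = 0].
Proof.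
have vs1 := msing_vsub M1.
case: (eqVneq (b e2 x *: e1 + (- b e1 x) *: e2) 0) => [h|h].
  have [_ h2] := E12 h.
  exists e1; split => //; [exact: nz_of_indep E12 | by apply/eqP; rewrite -oppr_eq0 h2].
exists (b e2 x *: e1 + (- b e1 x) *: e2); split.
- by apply: vs1.2 => //; apply: vsZ.
- by apply/eqP.
- by rewrite bfDl !bfZl mulNr mulrC subrr.
Qed.

Definition PY (Y : V -> Prop) := forall v, Y v -> v <> 0 -> sing v -> X v.

Lemma caseA Y x y : is_vsub Y -> PY Y -> X x -> ~ Y x -> Y y -> sing (y + x) ->
  b x (y + x) = 0 -> X (y + x).
Proof.
move=> vs PYY Xx nYx Yy sp hp.
have sx := Xsing Xx.
have sy : sing y.
  have -> : y = (-1) *: x + (y + x) by rewrite scaleN1r addrC addrK.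
  exact: sing_comb.
have [->|ny] := eqVneq y 0; first by rewrite add0r.
apply: Xline1 => //; first exact: (PYY y Yy (elimN eqP ny)).
  exact: (indepY vs Yy nYx (elimN eqP ny)).
have -> : y = (y + x) - x by rewrite addrK.
by rewrite bfBl (sing_bf sx) (bf_sym0 hp) subr0.
Qed.

Lemma caseB Y x y w : is_vsub Y -> PY Y -> X x -> ~ Y x -> Y y -> sing (y + x) ->
  Y w -> w <> 0 -> sing w -> b w x = 0 -> b w (y + x) != 0 -> X (y + x).
Proof.
move=> vs PYY Xx nYx Yy sp Yw nw sw hw hp.
pose t := - (b x (y + x) / b w (y + x)).
have Xw : X w := PYY w Yw nw sw.
have Xx' : X (x + t *: w).
  rewrite -[x]scale1r; apply: Xline => //; last by rewrite oner_eq0.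
  - exact: indep2C (indepY vs Yw nYx nw).
  - exact: bf_sym0.
have nYx' : ~ Y (x + t *: w).
  move=> h; apply: nYx; have -> : x = (x + t *: w) - t *: w by rewrite addrK.
  by apply: vsB => //; apply: vsZ.
have e : y + x = (y - t *: w) + (x + t *: w) by rewrite addrACA addNr addr0.
rewrite e; apply: (caseA vs PYY Xx' nYx').
- by apply: vsB => //; apply: vsZ.
- by rewrite -e.
- by rewrite -e bfDl bfZl /t mulNr divfK ?subrr.
Qed.

Lemma step Y x y : is_vsub Y -> PY Y -> (forall v, W1 v -> Y v) -> (forall v, W2 v -> Y v) ->
  X x -> ~ Y x -> Y y -> sing (y + x) -> X (y + x).
Proof.
move=> vs PYY S1 S2 Xx nYx Yy sp.
have sx := Xsing Xx.
have vs2 := msing_vsub M2.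
have pnz : y + x <> 0.
  move=> h; apply: nYx; have -> : x = - y by apply: (addrI y); rewrite h subrr.
  exact: vsN.
have CC : forall x0 y0, X x0 -> ~ Y x0 -> Y y0 -> y0 + x0 = y + x ->
    X (y + x) \/ exists lam, forall w, W2 w -> b w (y + x) = lam * b w x0.
  move=> x0 y0 Xx0 nYx0 Yy0 e0.
  case: (classic (exists w, [/\ W2 w, w <> 0, b w x0 = 0 & b w (y + x) != 0])) =>
      [[w [Ww nw hw1 hw2]]|Hn].
    left; rewrite -e0; apply: (caseB vs PYY Xx0 nYx0 Yy0 _ (S2 _ Ww) nw (msing_sing M2 Ww) hw1);
      by rewrite e0.
  right.
  have [w0 [Ww0 nz]] : exists w0, W2 w0 /\ b w0 x0 != 0.
    apply: NNPP => H; apply: nYx0; apply: S2; apply: MAX M2 (Xsing Xx0) _ => w Ww.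
    apply: NNPP => nz; apply: H; exists w; split => //; exact/eqP.
  apply: (propl vs2 (bf_lin1 x0) (bf_lin1 (y + x)) Ww0 nz) => w Ww h.
  apply: NNPP => nz'; apply: Hn; exists w; split => //; last exact/eqP.
  by move=> w0'; apply: nz'; rewrite w0' bf0l.
have [|[lam Hlam]] := CC x y Xx nYx Yy erefl; first by [].
have [e [We ne he]] := W1_perp x.
have Xx' : X (x + e) := Xline1 Xx (X1 We ne) (indep2C (indepY vs (S1 _ We) nYx ne)) (bf_sym0 he).
have nYx' : ~ Y (x + e).
  move=> h; apply: nYx; have -> : x = (x + e) - e by rewrite addrK.
  by apply: vsB => //; apply: S1.
have Yy' : Y (y - e) by apply: vsB => //; apply: S1.
have e' : (y - e) + (x + e) = y + x by rewrite addrACA addNr addr0.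
have [|[lam' Hlam']] := CC (x + e) (y - e) Xx' nYx' Yy' e'; first by [].
have key : forall w, W2 w -> (lam - lam') * b w x = lam' * b w e.
  move=> w Ww; have h1 := Hlam w Ww; have h2 := Hlam' w Ww; rewrite h1 bfDr in h2.
  by rewrite mulrBl h2; ring.
have se := msing_sing M1 We.
case: (eqVneq lam lam') => [eq|neq].
  have h0 : forall w, W2 w -> lam' * b w e = 0 by move=> w Ww; rewrite -key // eq subrr mul0r.
  case: (eqVneq lam' 0) => [z|nz].
    apply: X2 => //; apply: MAX M2 sp _ => w Ww; by rewrite Hlam // eq z mul0r.
  exfalso; apply: ne; apply: D12 => //; apply: MAX M2 se _ => w Ww.
  by move/eqP: (h0 w Ww); rewrite mulf_eq0 (negbTE nz) => /eqP.
have nd : lam - lam' != 0 by rewrite subr_eq0.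
pose k := lam' / (lam - lam').
have sxs : sing ((- sg k) *: e + x) by apply: sing_comb.
have W2s : W2 ((- sg k) *: e + x).
  apply: MAX M2 sxs _ => w Ww.
  apply: (mulfI nd); rewrite mulr0 bfDr bfZr sgN sgK mulrDr key // /k; field; exact: nd.
exfalso; apply: nYx; have -> : x = ((- sg k) *: e + x) - (- sg k) *: e by rewrite addrC addKr.
by apply: (vsB vs (S2 _ W2s)); apply: (vsZ vs); exact: S1.
Qed.

Lemma quad_cross q : phi = Quad q -> forall u w, sing u -> sing w -> sing (u + w) -> b u w = 0.
Proof. by move=> E u w; rewrite E /= /bilin => -> -> ->; rewrite !subr0. Qed.
Lemma herm_sing s f : phi = Herm s f -> forall v, sing v -> b v v = 0.
Proof. by move=> E v; rewrite E. Qed.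
Lemma herm_nontriv s f : phi = Herm s f -> exists a, sg a <> a.
Proof. by move=> E; move: Hphi; rewrite E => [[[_ _ _ h] _]]. Qed.

Lemma disj1 u w : W1 u -> W2 w -> u + w = 0 -> u = 0.
Proof.
move=> Wu Ww e; apply: D12 => //.
have -> : u = - w by apply: (addrI w); rewrite addrC e subrr.
by apply: vsN => //; exact: msing_vsub M2.
Qed.

Lemma base w1 w2 : W1 w1 -> W2 w2 -> w1 + w2 <> 0 -> sing (w1 + w2) -> X (w1 + w2).
Proof.
move=> W1w1 W2w2 nv sv.
have vs1 := msing_vsub M1; have vs2 := msing_vsub M2.
have [e10|n1] := eqVneq w1 0.
  by move: nv; rewrite e10 !add0r => nv; exact: X2 W2w2 nv.
have [e20|n2] := eqVneq w2 0.
  by move: nv; rewrite e20 !addr0 => nv; exact: X1 W1w1 nv.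
have n1' := elimN eqP n1; have n2' := elimN eqP n2.
have ind := indepW W1w1 W2w2 n1' n2'.
have Xw1 := X1 W1w1 n1'; have Xw2 := X2 W2w2 n2'.
have [d0|dn] := eqVneq (b w1 w2) 0; first exact: Xline1.
have [[q E]|[s [f E]]] := pform_cases phi.
  by exfalso; move/eqP: dn; apply; apply: (quad_cross E) => //;
    [exact: msing_sing M1 W1w1 | exact: msing_sing M2 W2w2].
set d := b w1 w2 in dn.
have o11 := msing_orth M1 W1w1 W1w1; have o22 := msing_orth M2 W2w2 W2w2.
have hd : d + sg d = 0.
  have := herm_sing E sv; rewrite bfDl !bfDr o11 o22 (bf_sym w1 w2) -/d.
  by rewrite add0r addr0.
have [e [We ne he]] := W1_perp w2.
have ind1e : indep2 w1 e.
  move=> al be h.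
  have := f_equal (fun z => b z w2) h; rewrite /= bfDl !bfZl he bf0l mulr0 addr0 -/d.
  move/eqP; rewrite mulf_eq0 (negbTE dn) orbF => /eqP a0.
  split => //; move: h; rewrite a0 scale0r add0r => /eqP; rewrite scaler_eq0.
  by case/orP => /eqP // e0; exfalso.
have [g [Wg hg1 hg2]] : exists g, [/\ W2 g, b g w1 = 0 & b g e != 0].
  apply: NNPP => H.
  have nz : b w2 w1 != 0 by rewrite bf_sym -/d sg_eq0.
  have [lam Hl] : exists lam, forall g, W2 g -> b g e = lam * b g w1.
    apply: (propl vs2 (bf_lin1 w1) (bf_lin1 e) W2w2 nz) => g Wg h.
    by apply: NNPP => h'; apply: H; exists g; split => //; apply/eqP.
  have W2s : W2 ((- sg lam) *: w1 + e).
    apply: MAX M2 _ _.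
      by apply: sing_comb; [exact: msing_sing M1 W1w1 | exact: msing_sing M1 We | exact: msing_orth M1 W1w1 We].
    by move=> w Ww; rewrite bfDr bfZr sgN sgK (Hl w Ww) mulNr addNr.
  have s0 : (- sg lam) *: w1 + e = 0.
    by apply: D12 => //; apply: vs1.2.
  have := ind1e (- sg lam) 1; rewrite scale1r => /(_ s0) [_ /eqP].
  by rewrite oner_eq0.
set k := b g e in hg2.
have ng : g <> 0 by move=> g0; move: hg2; rewrite /k g0 bf0l eqxx.
pose sc := - d / k.
pose u := sc *: g + e.
have Xg := X2 Wg ng.
have Xe := X1 We ne.
have XC : forall c, c * sg c = 1 -> X ((w1 + w2) + c *: u).
  move=> c hc.
  have c0 : c != 0 by apply/eqP => c0'; move: hc; rewrite c0' mul0r => /eqP; rewrite eq_sym oner_eq0.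
  have -> : (w1 + w2) + c *: u = (w1 + (c * sc) *: g) + (w2 + c *: e).
    by rewrite /u scalerDr scalerA addrACA.
  apply: Xline1.
  - rewrite -[w1]scale1r; apply: Xline => //; last by rewrite oner_eq0.
    + exact: indepW.
    + exact: bf_sym0.
  - rewrite -[w2]scale1r; apply: Xline => //; last by rewrite oner_eq0.
    + exact: indep2C (indepW We W2w2 ne n2').
    + exact: bf_sym0.
  - move=> al be h.
    have h' : (al *: w1 + (be * c) *: e) + ((al * (c * sc)) *: g + be *: w2) = 0.
      by rewrite -h !scalerDr !scalerA [RHS]rearr.
    have t1 : W1 (al *: w1 + (be * c) *: e) by apply: vsD => //; apply: vsZ.
    have t2 : W2 ((al * (c * sc)) *: g + be *: w2) by apply: vsD => //; apply: vsZ.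
    have h1 := disj1 t1 t2 h'.
    have [a0 bc0] := ind1e _ _ h1.
    split => //; move/eqP: bc0; rewrite mulf_eq0 (negbTE c0) orbF => /eqP //.
  - rewrite bfDl !bfDr !bfZl !bfZr -/d.
    rewrite (msing_orth M1 W1w1 We) (msing_orth M2 Wg W2w2) -/k.
    have -> : d + sg c * 0 + (c * sc * 0 + c * sc * (sg c * k)) = d + (c * sg c) * (sc * k) by ring.
    by rewrite hc mul1r /sc divfK // subrr.
have [a0 ha0] := herm_nontriv E.
have a0n : a0 != 0 by apply/eqP => z; apply: ha0; rewrite z sg0.
have sa0n : sg a0 != 0 by rewrite sg_eq0.
pose c0 := a0 / sg a0.
have hc0 : c0 * sg c0 = 1.
  by rewrite /c0 sgM sgV sgK; field; rewrite sa0n a0n.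
have c01 : 1 - c0 != 0.
  rewrite subr_eq0; apply/eqP => e0; apply: ha0.
  by rewrite -[RHS](divfK sa0n) -/c0 -e0 mul1r.
have h1 : 1 * sg 1 = 1 by rewrite sg1 mulr1.
have Xa := XC 1 h1; rewrite scale1r in Xa.
have Xb := XC c0 hc0.
set v := w1 + w2 in Xa Xb sv nv *.
have bvv : b v v = 0 := herm_sing E sv.
have buv : b u v = 0.
  rewrite /u bfDl bfZl !bfDr hg1 (msing_orth M2 Wg W2w2) (msing_orth M1 We W1w1) he.
  by rewrite !addr0 mulr0.
have bvu : b v u = 0 := bf_sym0 buv.
have hsk : sc * k = - d by rewrite /sc divfK.
have buu : b u u = 0.
  rewrite /u bfDl bfZl !bfDr !bfZr (msing_orth M2 Wg Wg) (msing_orth M1 We We) (bf_sym g e) -/k.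
  by rewrite mulr0 add0r addr0 -sgM hsk sgN -opprD hd oppr0.
have dec : forall p r, p *: v + r *: u = (p *: w1 + r *: e) + (p *: w2 + (r * sc) *: g).
  by move=> p r; rewrite /v /u !scalerDr scalerA rearr.
have indab : indep2 (v + u) (v + c0 *: u).
  move=> al be h; rewrite comb2 dec in h.
  have t1 : W1 ((al + be) *: w1 + (al + be * c0) *: e) by apply: vsD => //; apply: vsZ.
  have t2 : W2 ((al + be) *: w2 + ((al + be * c0) * sc) *: g) by apply: vsD => //; apply: vsZ.
  have [p0 r0] := ind1e _ _ (disj1 t1 t2 h).
  have hb : be * (c0 - 1) = (al + be * c0) - (al + be) by ring.
  rewrite r0 p0 subrr in hb.
  have be0 : be = 0.
    move/eqP: hb; rewrite mulf_eq0 => /orP[/eqP //|]; rewrite subr_eq0 eq_sym -subr_eq0.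
    by rewrite (negbTE c01).
  by split => //; move: p0; rewrite be0 addr0.
have -> : v = (- c0 / (1 - c0)) *: (v + u) + (1 / (1 - c0)) *: (v + c0 *: u).
  rewrite comb2.
  have -> : - c0 / (1 - c0) + 1 / (1 - c0) = 1 by field.
  have -> : - c0 / (1 - c0) + 1 / (1 - c0) * c0 = 0 by field.
  by rewrite scale1r scale0r addr0.
apply: Xline => //.
- by rewrite (bfDl v u) (bfDr v v) (bfDr u v) !bfZr bvv bvu buv buu !mulr0 !addr0.
- by apply/orP; right; rewrite mul1r invr_eq0.
Qed.

Lemma main_nice k (c : 'I_k -> F) (x : 'I_k -> V) : (forall i, X (x i)) ->
  exists Y, [/\ is_vsub Y, PY Y, (forall v, W1 v -> Y v), (forall v, W2 v -> Y v) &
    Y (\sum_(i < k) c i *: x i)].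
Proof.
have vs1 := msing_vsub M1; have vs2 := msing_vsub M2.
elim: k c x => [|k IH] c x Hx.
  exists (fun v => exists w1 w2, [/\ W1 w1, W2 w2 & v = w1 + w2]); split.
  - split; first by exists 0, 0; split; [exact: vs0 vs1 | exact: vs0 vs2 | rewrite addr0].
    move=> a u w [u1 [u2 [h1 h2 ->]]] [w1 [w2 [k1 k2 ->]]].
    exists (a *: u1 + w1), (a *: u2 + w2); split; [exact: vs1.2 | exact: vs2.2 |].
    by rewrite scalerDr addrACA.
  - by move=> v [w1 [w2 [h1 h2 ->]]] nv sv; apply: base.
  - by move=> v hv; exists v, 0; split; [| exact: vs0 vs2 | rewrite addr0].
  - by move=> v hv; exists 0, v; split; [exact: vs0 vs1 | | rewrite add0r].
  - by rewrite big_ord0; exists 0, 0; split; [exact: vs0 vs1 | exact: vs0 vs2 | rewrite addr0].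
have [Y [vs PYY S1 S2 Ys]] := IH (fun i => c (widen_ord (leqnSn k) i))
  (fun i => x (widen_ord (leqnSn k) i)) (fun i => Hx _).
set xm := x ord_max.
have Xm : X xm := Hx _.
exists (fun v => exists y a, Y y /\ v = y + a *: xm); split.
- split; first by exists 0, 0; split; [exact: vs0 vs | rewrite scale0r addr0].
  move=> a u w [u1 [a1 [h1 ->]]] [w1 [b1 [k1 ->]]].
  exists (a *: u1 + w1), (a * a1 + b1); split; first exact: vs.2.
  by rewrite scalerDr scalerDl scalerA addrACA.
- move=> v [y [a [Yy ->]]] nv sv.
  case: (classic (Y xm)) => [Yxm|nYxm].
    by apply: PYY => //; apply: vsD => //; apply: vsZ.
  have [a0|an] := eqVneq a 0.
    by move: nv sv; rewrite a0 scale0r addr0 => nv sv; apply: PYY.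
  have -> : y + a *: xm = a *: (a^-1 *: y + xm).
    by rewrite scalerDr scalerA divff // scale1r.
  apply: XZ => //; apply: (step vs PYY S1 S2 Xm nYxm); first by apply: vsZ.
  have -> : a^-1 *: y + xm = a^-1 *: (y + a *: xm) by rewrite scalerDr scalerA mulVf // scale1r.
  exact: sing_scale.
- by move=> v hv; exists v, 0; split; [exact: S1 | rewrite scale0r addr0].
- by move=> v hv; exists v, 0; split; [exact: S2 | rewrite scale0r addr0].
- by rewrite big_ord_recr /=; exists (\sum_(i < k) c (widen_ord (leqnSn k) i) *: x (widen_ord (leqnSn k) i)), (c ord_max).
Qed.

End Nice.
End Form.

Unset Implicit Arguments.
Set Strict Implicit.

Theorem lemma2 (F : fieldType) (V : lmodType F) (phi : pform V) (n : nat)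
  (X : V -> Prop) :
  is_pform phi -> pform_nondeg phi -> witt_index phi n -> (2 <= n)%N ->
  ~ (is_quad phi /\ n = 2%N /\ has_dim (fun _ : V => True) 4) ->
  nice_subspace phi X ->
  forall v : V, v <> 0 -> ((lspan X v /\ psingular phi v) <-> X v).
Proof.
move=> Hphi _ [[W [vsW [tsW [xb [li span]]]]] _] n2 _ [HX [W1 [W2 [M1 M2 D X1 X2]]]] v nv.
split; last first.
  move=> Xv; split; last by case: HX => _ h _; exact: h.
  exists 1%N, (fun _ => 1), (fun _ => v); split => //.
  by rewrite big_ord1 scale1r.
move=> [[k [c [x [Hx ev]]]] sv].
have h0 : (0 < n)%N by apply: ltnW.
pose i0 : 'I_n := Ordinal h0.
pose i1 : 'I_n := Ordinal n2.
have neq10 : i1 != i0 by [].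
have Wx i : W (xb i).
  apply/span; exists 1%N, (fun _ => 1), (fun _ => xb i); split; first by move=> _; exists i.
  by rewrite big_ord1 scale1r.
have ind : indep2 (xb i0) (xb i1).
  move=> al be h.
  pose cc := fun i : 'I_n => if i == i0 then al else if i == i1 then be else 0.
  have hsum : \sum_(i < n) cc i *: xb i = al *: xb i0 + be *: xb i1.
    rewrite (bigD1 i0) //= (bigD1 (P := fun i => i != i0) i1 neq10) /= big1 ?addr0.
      by rewrite /cc eqxx (negbTE neq10) eqxx.
    by move=> i /andP [h1 h2]; rewrite /cc (negbTE h1) (negbTE h2) scale0r.
  have := li cc; rewrite hsum => /(_ h) hc.
  by split; [have := hc i0; rewrite /cc eqxx | have := hc i1; rewrite /cc (negbTE neq10) eqxx].
have [e1 [e2 [E1 E2 E12]]] := two_vecs Hphi M1 vsW tsW (Wx i0) (Wx i1) ind.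
have [Y [vs PYY S1 S2 Yv]] := main_nice Hphi HX M1 M2 D X1 X2 E1 E2 E12 c Hx.
by apply: PYY => //; rewrite ev.
Qed.
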